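(* Let $k$ be a positive integer and let $D=(V,A,w)$ be a weighted digraph with maximum out-degree $\Delta^+(D)\le k$ or maximum in-degree $\Delta^-(D)\le k$. Then $\mathrm{mac}(D)\ge\left(\frac14+\frac{1}{8k+4}\right)w(D)$.
   Context: A weighted digraph $D=(V,A,w)$ is a digraph without loops or parallel arcs (opposite arcs allowed) with weights $w:A\to\mathbb{R}_{\ge0}$; $w(D)$ is the total arc weight. Degrees are numbers of arcs (unweighted). For a partition $(X,Y)$ of $V$, $w(X,Y)$ is the total weight of arcs from $X$ to $Y$, and $\mathrm{mac}(D)=\max_{(X,Y)} w(X,Y)$ over all partitions. *)

(* Defs.v *)
From mathcomp Require Import all_boot all_order all_algebra.
Set Implicit Arguments. Unset Strict Implicit. Unset Printing Implicit Defensive.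
Import Order.TTheory GRing.Theory Num.Theory.
Local Open Scope ring_scope.

(* A weighted digraph on a finite vertex type V: arc relation [arc] (no loops:
   irreflexive; at most one arc per ordered pair, opposite arcs allowed) and
   weights [w x y], meaningful (and required nonnegative) only on arcs. *)

Definition loopless (V : finType) (arc : rel V) : Prop := forall x, ~~ arc x x.

Definition nonneg_weights (R : realFieldType) (V : finType) (arc : rel V)
  (w : V -> V -> R) : Prop := forall x y, arc x y -> 0 <= w x y.

Definition outdeg (V : finType) (arc : rel V) (x : V) : nat := #|[set y | arc x y]|.
Definition indeg (V : finType) (arc : rel V) (y : V) : nat := #|[set x | arc x y]|.

Definition total_weight (R : realFieldType) (V : finType) (arc : rel V)
  (w : V -> V -> R) : R :=
  \sum_(x : V) \sum_(y : V | arc x y) w x y.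

Definition cut_weight (R : realFieldType) (V : finType) (arc : rel V)
  (w : V -> V -> R) (X : {set V}) : R :=
  \sum_(x in X) \sum_(y in ~: X | arc x y) w x y.

Definition mac (R : realFieldType) (V : finType) (arc : rel V)
  (w : V -> V -> R) : R :=
  \big[Num.max/0]_(X : {set V}) cut_weight arc w X.

(* Main.v *)
Require Import Defs.
From mathcomp Require Import all_boot all_order all_algebra.
From mathcomp Require Import zify ring lra.
Import Order.TTheory GRing.Theory Num.Theory.

Lemma card_in_sum (V : finType) (S : {set V}) (P : pred V) :
  #|[set y in S | P y]| = \sum_(y in S) (P y : nat).
Proof.
rewrite -sum1_card big_mkcond [RHS]big_mkcond /=; apply: eq_bigr => y _.
by rewrite inE; case: (y \in S); case: (P y).
Qed.

Lemma low_deg (V : finType) (arc : rel V) (k : nat) (S : {set V}) :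
  ((forall x, (outdeg arc x <= k)%N) \/ (forall x, (indeg arc x <= k)%N)) ->
  S != set0 ->
  exists2 x, x \in S &
    (#|[set y in S | arc x y]| + #|[set y in S | arc y x]| <= 2 * k)%N.
Proof.
move=> hdeg hS.
have dc : \sum_(x in S) #|[set y in S | arc x y]| =
          \sum_(x in S) #|[set y in S | arc y x]|.
  under eq_bigr do rewrite card_in_sum.
  under [RHS]eq_bigr do rewrite card_in_sum.
  exact: exchange_big.
have hsum : (\sum_(x in S) (#|[set y in S | arc x y]| + #|[set y in S | arc y x]|)
             <= #|S| * (2 * k))%N.
  rewrite big_split /= -dc.
  have : (\sum_(x in S) #|[set y in S | arc x y]| <= #|S| * k)%N.
    case: hdeg => hd.
      rewrite -sum_nat_const; apply: leq_sum => x _.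
      apply: leq_trans (hd x); apply: subset_leq_card.
      by apply/subsetP => y; rewrite !inE => /andP[].
    rewrite dc -sum_nat_const; apply: leq_sum => x _.
    apply: leq_trans (hd x); apply: subset_leq_card.
    by apply/subsetP => y; rewrite !inE => /andP[].
  move=> h; lia.
have [x xS hx] : exists2 x, x \in S & ~~ (2 * k < #|[set y in S | arc x y]| + #|[set y in S | arc y x]|)%N.
  apply/exists_inP; apply: contraT; rewrite negb_exists_in => /forall_inP hall.
  have : (\sum_(x in S) (2 * k).+1 <= #|S| * (2 * k))%N.
    apply: leq_trans hsum; apply: leq_sum => x xS; by have := hall x xS; rewrite negbK.
  rewrite sum_nat_const; have : (0 < #|S|)%N by rewrite card_gt0.
  nia.
by exists x => //; rewrite leqNgt.
Qed.


Lemma coloring (V : finType) (arc : rel V) (k : nat) :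
  loopless arc ->
  ((forall x, (outdeg arc x <= k)%N) \/ (forall x, (indeg arc x <= k)%N)) ->
  exists c : V -> 'I_((2 * k).+1), forall x y, arc x y -> c x != c y.
Proof.
move=> hl hdeg.
suff H : forall n (S : {set V}), (#|S| <= n)%N ->
  exists c : V -> 'I_((2 * k).+1), forall x y, x \in S -> y \in S -> arc x y -> c x != c y.
  have [c hc] := H _ [set: V] (leqnn _).
  by exists c => x y; apply: hc; rewrite inE.
elim=> [|n IH] S hS.
  exists (fun _ => ord0) => x y; move: hS; rewrite leqn0 cards_eq0 => /eqP ->.
  by rewrite inE.
have [->|S0] := eqVneq S set0.
  by exists (fun _ => ord0) => x y; rewrite inE.
have [x xS hx] := @low_deg _ _ _ S hdeg S0.
have [c hc] : exists c : V -> 'I_((2 * k).+1), forall u v, u \in S :\ x -> v \in S :\ x -> arc u v -> c u != c v.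
  apply: IH; move: hS; rewrite (cardsD1 x S) xS; lia.
pose N := [set y in S | arc x y] :|: [set y in S | arc y x].
have hN : (#|c @: N| <= 2 * k)%N.
  apply: leq_trans (leq_imset_card _ _) _; rewrite cardsU; lia.
have [col hcol] : exists col, col \notin c @: N.
  apply/existsP; apply: contraT; rewrite negb_exists => /forallP hall.
  have : (#|'I_((2 * k).+1)| <= #|c @: N|)%N.
    apply: subset_leq_card; apply/subsetP => z _; have := hall z; by rewrite negbK.
  rewrite card_ord; lia.
exists (fun z => if z == x then col else c z) => u v uS vS huv.
have hnot : forall z, z \in S -> z != x -> (arc x z || arc z x) -> col != c z.
  move=> z zS _ hz; apply: contraNneq hcol => ->; apply: imset_f.
  by rewrite !inE zS /=.
case: (eqVneq u x) => [eux|nux]; case: (eqVneq v x) => [evx|nvx].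
- by move: huv; rewrite eux evx (negbTE (hl x)).
- by apply: hnot => //; rewrite -eux huv.
- by rewrite eq_sym; apply: hnot => //; rewrite -evx huv orbT.
- by apply: hc => //; rewrite !inE ?nux ?nvx.
Qed.

Lemma countT (n k : nat) (a b : 'I_n) : a != b ->
  #|[set T : {set 'I_n} | [&& #|T| == k.+1, a \in T & b \notin T]]| = 'C(n - 2, k).
Proof.
move=> ab.
have -> : [set T : {set 'I_n} | [&& #|T| == k.+1, a \in T & b \notin T]] =
          (fun S : {set 'I_n} => a |: S) @: [set S : {set 'I_n} | S \subset ~: [set a; b] & #|S| == k].
  apply/setP => T; rewrite inE; apply/idP/imsetP.
  - case/and3P => /eqP hT aT bT; exists (T :\ a); last by rewrite setD1K.
    rewrite inE; apply/andP; split.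
      apply/subsetP => z; rewrite !inE negb_or => /andP[za zT]; rewrite za /=.
      by apply: contraNneq bT => <-.
    by apply/eqP; move: hT; rewrite (cardsD1 a T) aT /= => -[].
  - case=> S; rewrite inE => /andP[/subsetP sS /eqP hS] ->.
    have aS : a \notin S by apply/negP => /sS; rewrite !inE eqxx.
    have bS : b \notin S by apply/negP => /sS; rewrite !inE eqxx orbT.
    rewrite cardsU1 aS hS eqxx setU11 /= !inE negb_or bS andbT eq_sym ab.
    done.
rewrite card_in_imset; last first.
  move=> S1 S2; rewrite !inE => /andP[/subsetP s1 _] /andP[/subsetP s2 _] e.
  have a1 : a \notin S1 by apply/negP => /s1; rewrite !inE eqxx.
  have a2 : a \notin S2 by apply/negP => /s2; rewrite !inE eqxx.
  by rewrite -(setU1K a1) -(setU1K a2) e.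
rewrite cards_draws; congr 'C(_, _).
have h := cardsC [set a; b]; rewrite cards2 ab card_ord /= in h; move: (#|~: _|) h => m h; lia.
Qed.

Local Open Scope ring_scope.

Lemma avg (R : realFieldType) (V : finType) (arc : rel V) (w : V -> V -> R) (k : nat)
  (c : V -> 'I_((2 * k).+1)) : (forall x y, arc x y -> c x != c y) ->
  ('C((2 * k).+1 - 2, k))%:R * total_weight arc w <=
  ('C((2 * k).+1, k.+1))%:R * mac arc w.
Proof.
move=> hc.
set n := (2 * k).+1.
pose F := [set T : {set 'I_n} | #|T| == k.+1].
pose X (T : {set 'I_n}) := [set x | c x \in T].
have h1 : forall T, cut_weight arc w (X T) <= mac arc w.
  by move=> T; rewrite /mac (bigD1 (X T)) //= le_max lexx.
have hF : #|F| = 'C(n, k.+1) by rewrite /F card_draws card_ord.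
rewrite -hF.
have h2 : \sum_(T in F) cut_weight arc w (X T) <= #|F|%:R * mac arc w.
  rewrite mulr_natl -sumr_const; exact: ler_sum.
apply: le_trans h2.
rewrite le_eqVlt; apply/orP; left; apply/eqP.
rewrite /cut_weight /total_weight.
transitivity (\sum_(T in F) \sum_x \sum_y
   (if [&& c x \in T, c y \notin T & arc x y] then w x y else 0)); last first.
  symmetry; apply: eq_bigr => T _; rewrite big_mkcond; apply: eq_bigr => x _.
  rewrite inE; case: ifP => cxT /=.
    rewrite big_mkcond; apply: eq_bigr => y _; rewrite !inE; done.
  by rewrite big1.
rewrite exchange_big mulr_sumr; apply: eq_bigr => x _.
rewrite exchange_big mulr_sumr [in LHS]big_mkcond; apply: eq_bigr => y _.
case: (boolP (arc x y)) => axy /=; last first.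
  by rewrite big1 // => T _; rewrite !andbF.
have -> : \sum_(T in F) (if [&& c x \in T, c y \notin T & true] then w x y else 0) =
  \sum_(T in [set T : {set 'I_n} | [&& #|T| == k.+1, c x \in T & c y \notin T]]) w x y.
  rewrite big_mkcond [RHS]big_mkcond; apply: eq_bigr => T _; rewrite !inE andbT.
  by case: (#|T| == k.+1).
by rewrite sumr_const countT ?hc // mulr_natl.
Qed.

Lemma binid (k : nat) : (0 < k)%N ->
  ('C((2 * k).+1, k.+1) * k.+1 = 'C((2 * k).+1 - 2, k) * (2 * (2 * k).+1))%N.
Proof.
case: k => // j _.
set n := (2 * j.+1).+1.
have e1 := mul_bin_diag n j.+1.
have e2 := mul_bin_diag n.-1 j.
have e3 : 'C(n.-2, j) = 'C(n.-2, j.+1).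
  rewrite -(@bin_sub n.-2 j.+1); last by rewrite /n; lia.
  by congr 'C(_,_); rewrite /n; lia.
have -> : (n - 2 = n.-2)%N by lia.
rewrite -e3.
have e5 : n.-1 = (2 * j.+1)%N by [].
rewrite e5 in e2.
move: e1 e2; rewrite /n /= => e1 e2.
nia.
Qed.

Theorem mainTheorem2 (R : realFieldType) (V : finType) (arc : rel V)
  (w : V -> V -> R) (k : nat) :
  (0 < k)%N ->
  loopless arc ->
  nonneg_weights arc w ->
  ((forall x, (outdeg arc x <= k)%N) \/ (forall x, (indeg arc x <= k)%N)) ->
  mac arc w >= (1 / 4 + 1 / (8 * k%:R + 4)) * total_weight arc w.
Proof.
move=> k0 hl _ hdeg.
have [c hc] := @coloring V arc k hl hdeg.
have h := @avg R V arc w k c hc.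
set n := (2 * k).+1 in h.
have hid := @binid k k0.
have Cpos : (0 : R) < ('C(n, k.+1))%:R by rewrite ltr0n bin_gt0 /n; lia.
rewrite -(ler_pM2l Cpos); apply: le_trans h.
have hidR : ('C(n, k.+1))%:R * (k.+1)%:R = ('C(n - 2, k))%:R * (2 * n)%N%:R :> R.
  by rewrite -!natrM hid.
have nz : (2 * n)%N%:R != 0 :> R by rewrite pnatr_eq0 /n; lia.
have -> : ('C(n - 2, k))%:R = ('C(n, k.+1))%:R * (k.+1)%:R / (2 * n)%N%:R :> R.
  by rewrite hidR mulfK.
rewrite le_eqVlt; apply/orP; left; apply/eqP.
have k0R : (0 : R) <= k%:R by rewrite ler0n.
have e2n : (2 * n)%N%:R = 4 * k%:R + 2 :> R.
  by rewrite /n; ring.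
rewrite e2n.
have ek : (k.+1)%:R = k%:R + 1 :> R by ring.
rewrite ek.
have nz1 : 4 * k%:R + 2 != 0 :> R by rewrite lt0r_neq0 //; lra.
have nz2 : 8 * k%:R + 4 != 0 :> R by rewrite lt0r_neq0 //; lra.
have nz3 : 'C(n, k.+1)%:R != 0 :> R by rewrite lt0r_neq0.
field.
by rewrite nz1 nz2.
Qed.
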